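(* Let $H$ be an acyclic simple digraph, let $k$ be a positive integer, and let $T$ be a tournament that does not contain $k$ pairwise arc-disjoint immersion copies of $H$. Then there is a set $F$ of at most $d_{\mathrm{eh}}^2\cdot 4^{|V(H)|}\,k$ arcs of $T$ such that $T-F$ does not contain $H$ as an immersion.
   Context: A tournament is a simple digraph with exactly one arc between every pair of distinct vertices. An immersion copy of $H$ in a digraph $G$ is a subgraph $\widehat H$ of $G$ with a map sending vertices of $H$ to distinct vertices of $\widehat H$ and each arc $(u,v)$ of $H$ to a directed path from the image of $u$ to the image of $v$, such that each arc of $\widehat H$ lies on exactly one of these paths; $G$ contains $H$ as an immersion if it has such a subgraph. $T-F$ is $T$ with the arcs of $F$ removed. $d_{\mathrm{eh}}$ denotes a fixed universal constant such that for all positive integers $q,k$, a complete graph on at least $d_{\mathrm{eh}}\cdot q\sqrt{k}$ vertices contains $k$ pairwise edge-disjoint complete subgraphs on $q$ vertices each. *)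

(* Defs.v *)
From mathcomp Require Import all_boot.
From Stdlib Require Import Reals.

Set Implicit Arguments.
Unset Strict Implicit.
Unset Printing Implicit Defensive.

(* simple digraph: no loops (multiple arcs are impossible for a relation) *)
Definition simple_digraph (V : finType) (H : rel V) : Prop := irreflexive H.

Definition acyclic (V : finType) (H : rel V) : Prop :=
  forall (x : V) (p : seq V), path H x p -> last x p = x -> p = [::].

Definition tournament (W : finType) (A : rel W) : Prop :=
  irreflexive A /\ forall u v : W, u != v -> (A u v && ~~ A v u) || (A v u && ~~ A u v).

Definition arcset (W : finType) (A : rel W) : {set W * W} :=
  [set e | A e.1 e.2].

Definition walk_arcs (W : finType) (x : W) (p : seq W) : {set W * W} :=
  [set e | e \in zip (x :: p) p].

Definition dipath (W : finType) (E : {set W * W}) (x y : W) (p : seq W) : Prop :=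
  path (fun a b => (a, b) \in E) x p /\ last x p = y /\ uniq (x :: p).

(* An immersion copy of H in the digraph E: an injective vertex map phi and,
   for each arc (u,v) of H, a directed path P u v from phi u to phi v in E,
   such that the paths of distinct arcs are arc-disjoint (so every arc of the
   copy, i.e. of the union of the paths, lies on exactly one of them). *)
Definition immersion_copy (V W : finType) (H : rel V) (E : {set W * W})
    (phi : V -> W) (P : V -> V -> seq W) : Prop :=
  injective phi /\
  (forall u v, H u v -> dipath E (phi u) (phi v) (P u v)) /\
  (forall u v u' v', H u v -> H u' v' -> (u, v) <> (u', v') ->
     [disjoint walk_arcs (phi u) (P u v) & walk_arcs (phi u') (P u' v')]).

Definition copy_arcs (V W : finType) (H : rel V) (phi : V -> W)
    (P : V -> V -> seq W) : {set W * W} :=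
  \bigcup_(a : V * V | H a.1 a.2) walk_arcs (phi a.1) (P a.1 a.2).

Definition contains_immersion (V W : finType) (H : rel V) (E : {set W * W}) : Prop :=
  exists (phi : V -> W) (P : V -> V -> seq W), immersion_copy H E phi P.

Definition contains_k_disjoint_immersions (V W : finType) (H : rel V)
    (E : {set W * W}) (k : nat) : Prop :=
  exists (phi : 'I_k -> V -> W) (P : 'I_k -> V -> V -> seq W),
    (forall i, immersion_copy H E (phi i) (P i)) /\
    (forall i j, i != j -> [disjoint copy_arcs H (phi i) (P i) & copy_arcs H (phi j) (P j)]).

(* The defining property of d_eh: for all positive q, k, the complete graph on
   n >= d q sqrt(k) vertices contains k pairwise edge-disjoint complete subgraphs
   on q vertices (given by their vertex sets; two cliques share an edge iff they
   share two distinct vertices). *)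
Definition eh_constant (d : R) : Prop :=
  forall q k n : nat, (0 < q)%N -> (0 < k)%N ->
    (d * INR q * sqrt (INR k) <= INR n)%R ->
    exists S : 'I_k -> {set 'I_n},
      (forall i, #|S i| = q) /\
      (forall i j, i != j -> forall u v : 'I_n, u != v ->
         ~ [/\ u \in S i, v \in S i, u \in S j & v \in S j]).

(* Main.v *)
Require Import Defs.
From mathcomp Require Import all_boot zify.
From Stdlib Require Import Reals Lra.
Set Implicit Arguments.
Unset Strict Implicit.

Lemma topo (V : finType) (H : rel V) : acyclic H ->
  exists f : V -> nat, injective f /\ (forall v, f v < #|V|) /\ (forall u v, H u v -> f u < f v).
Proof.
move=> Hac.
pose ord u := #|[pred w | connect H w u]|.
pose le := fun x y => ord x <= ord y.
pose s := sort le (enum V).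
have ins : forall u, u \in s by move=> u; rewrite mem_sort mem_enum.
exists (fun u => index u s); split; [|split].
- by move=> x y; apply: (index_inj x); rewrite ?ins.
- by move=> v; rewrite cardE -(size_sort le) index_mem ins.
move=> u v Huv.
have Hord : ord u < ord v.
  apply: proper_card; apply/properP; split.
    apply/subsetP=> w; rewrite !inE => Hw.
    by apply: connect_trans Hw (connect1 Huv).
  exists v; rewrite !inE ?connect0 //.
  apply/negP => /connectP [p Hp Hl].
  have := Hac u (v :: p); rewrite /= Huv Hp => /(_ isT (esym Hl)); done.
rewrite ltnNge; apply/negP => Hle.
have Htr : transitive le by move=> x y z; apply: leq_trans.
have Hrf : reflexive le by move=> x; apply: leqnn.
have Htot : total le by move=> x y; apply: leq_total.
have := sorted_leq_index Htr Hrf (sort_sorted Htot (enum V)) v u (ins v) (ins u) Hle.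
by rewrite /le leqNgt Hord.
Qed.

Lemma erdos_moser (W : finType) (A : rel W) : tournament A ->
  forall m (S : {set W}), expn 2 m <= #|S| ->
  exists s, [/\ size s = m.+1, uniq s, {subset s <= S} & pairwise A s].
Proof.
move=> [Hirr Htour]; elim=> [|m IH] S HS.
  have /card_gt0P [x Hx] : 0 < #|S| by rewrite (leq_trans _ HS).
  by exists [:: x]; split => //= y; rewrite inE => /eqP ->.
have /card_gt0P [x Hx] : 0 < #|S| by rewrite (leq_trans _ HS) // expn_gt0.
pose O := [set y in S | A x y]; pose I := [set y in S | A y x].
have Hsub : S \subset x |: (O :|: I).
  apply/subsetP => y Hy; rewrite !inE Hy /=.
  case: (eqVneq y x) => //= Hyx.
  by have := Htour x y; rewrite eq_sym Hyx => /(_ isT) /orP [/andP [->]|/andP [->]] //; rewrite orbT.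
have Hc := subset_leq_card Hsub.
have Hc2 : #|x |: (O :|: I)| <= 1 + (#|O| + #|I|).
  rewrite cardsU1 cardsU; case: (x \notin _); lia.
have [HO|HI] : expn 2 m <= #|O| \/ expn 2 m <= #|I|.
  rewrite expnS in HS; lia.
- have [s [Hsz Hu Hs Hp]] := IH O HO.
  exists (x :: s); split.
  + by rewrite /= Hsz.
  + rewrite /= Hu andbT; apply/negP => /Hs; rewrite /O inE Hirr andbF //.
  + by move=> y; rewrite inE => /orP [/eqP ->|/Hs]; rewrite // /O inE => /andP [].
  + rewrite /= Hp andbT; apply/allP => y /Hs; rewrite /O inE => /andP [] //.
- have [s [Hsz Hu Hs Hp]] := IH I HI.
  exists (rcons s x); split.
  + by rewrite size_rcons Hsz.
  + rewrite rcons_uniq Hu andbT; apply/negP => /Hs; rewrite /I inE Hirr andbF //.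
  + by move=> y; rewrite mem_rcons inE => /orP [/eqP ->|/Hs]; rewrite // /I inE => /andP [].
  + rewrite pairwise_rcons Hp andbT; apply/allP => y /Hs; rewrite /I inE => /andP [] //.
Qed.
Lemma walk1 (W : finType) (x y : W) : walk_arcs x [:: y] = [set (x, y)].
Proof. by apply/setP => e; rewrite !inE. Qed.

Lemma INR_pow2 n : INR (expn 2 n) = pow 2%R n.
Proof.
elim: n => [|n IH]; first by [].
by rewrite expnS -multE mult_INR IH.
Qed.

Lemma noarc_copies (V W : finType) (H : rel V) (A : rel W) (k : nat) :
  simple_digraph H -> contains_immersion H (arcset A :\: arcset A) ->
  contains_k_disjoint_immersions H (arcset A) k.
Proof.
move=> Hs [phi [P [Hinj [Hpath _]]]].
have noH : forall u v, H u v = false.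
  move=> u v; apply/negP => Huv.
  have [Hp [Hl _]] := Hpath u v Huv.
  move: Hp Hl; rewrite setDv; case: (P u v) => [|y p] /=.
    by move=> _ /Hinj Heq; move: Huv; rewrite Heq Hs.
  by rewrite inE.
have C0 : forall (phi : V -> W) P, copy_arcs H phi P = set0.
  by move=> phi' P'; rewrite /copy_arcs big_pred0 // => a; exact: noH.
exists (fun _ => phi), (fun _ => P); split.
  move=> i; split; first exact: Hinj.
  by split => u v; rewrite noH.
by move=> i j _; rewrite -setI_eq0 !C0 set0I.
Qed.

Theorem corollary15 (d : R) (Hd : eh_constant d)
    (V W : finType) (H : rel V) (A : rel W) (k : nat) :
  simple_digraph H -> acyclic H -> tournament A -> (0 < k)%N ->
  ~ contains_k_disjoint_immersions H (arcset A) k ->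
  exists F : {set W * W},
    F \subset arcset A /\
    (INR #|F| <= d ^ 2 * 4 ^ #|V| * INR k)%R /\
    ~ contains_immersion H (arcset A :\: F).
Proof.
move=> Hs Hac Htour Hk Hnot.
case: (Rle_dec (d * INR (expn 2 #|V|) * sqrt (INR k)) (INR #|W|)) => Hcase.
  exfalso; apply: Hnot.
  have [S [HSc HSd]] := Hd (expn 2 #|V|) k #|W| (expn_gt0 _ _) Hk Hcase.
  have [f [finj [fb fH]]] := topo Hac.
  pose S' i := [set enum_val x | x in S i].
  have HS'c : forall i, #|S' i| = expn 2 #|V| by move=> i; rewrite card_imset ?HSc //; apply: enum_val_inj.
  have Ht : forall i, exists t, [/\ size t = #|V|.+1, uniq t, {subset t <= S' i} & pairwise A t].
    by move=> i; apply: erdos_moser => //; rewrite HS'c.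
  have [t Ht'] := fin_all_exists Ht.
  case: (Ht' (Ordinal Hk)) => Hsz0 _ _ _.
  have [x0 _] : exists x0 : W, true.
    by move: Hsz0; case: (t (Ordinal Hk)) => [|x0 _] // _; exists x0.
  pose phi i u := nth x0 (t i) (f u).
  pose P (i : 'I_k) (u v : V) := [:: phi i v].
  have fb' : forall i u, f u < size (t i).
    by move=> i u; have [-> _ _ _] := Ht' i; rewrite ltnS ltnW.
  have phinj : forall i, injective (phi i).
    move=> i u v /eqP; have [_ Hu _ _] := Ht' i.
    by rewrite /phi nth_uniq ?fb' // => /eqP; apply: finj.
  have phiS : forall i u, enum_rank (phi i u) \in S i.
    move=> i u; have [_ _ Hsub _] := Ht' i.
    have /Hsub /imsetP [y Hy ->] : phi i u \in t i by apply: mem_nth.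
    by rewrite enum_valK.
  exists phi, P; split.
    move=> i; have [Hsz Hu Hsub Hp] := Ht' i.
    split; first exact: phinj.
    split.
      move=> u v Huv; rewrite /dipath /=; split; [|split=>//].
        rewrite andbT inE /=; apply: (pairwiseP x0 Hp); rewrite ?inE ?fb' //.
        exact: fH.
      rewrite inE andbT; apply/negP => /eqP /phinj Heq; move: Huv; rewrite Heq Hs //.
    move=> u v u' v' Huv Hu'v' Hne; rewrite /P !walk1 disjoints1 in_set1.
    by apply/negP => /eqP [/phinj E1 /phinj E2]; apply: Hne; rewrite E1 E2.
  move=> i j Hij; rewrite /copy_arcs.
  apply/bigcup_disjointP => [[u v]] /= Huv; rewrite disjoint_sym.
  apply/bigcup_disjointP => [[u' v']] /= Hu'v'.
  rewrite /P !walk1 disjoints1 in_set1; apply/negP => /eqP [E1 E2].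
  apply: (HSd j i _ (enum_rank (phi j u)) (enum_rank (phi j v))).
  - by rewrite eq_sym.
  - apply/eqP => /enum_rank_inj /phinj Heq; move: Huv; rewrite Heq Hs //.
  - by rewrite {2}E1 {2}E2 !phiS.
exists (arcset A); split; first exact: subxx.
split; last first.
  by move=> Himm; apply: Hnot; exact: noarc_copies Hs Himm.
have Hc : (#|arcset A| <= muln #|W| #|W|)%N by rewrite -card_prod max_card.
have HcR := le_INR _ _ (leP Hc).
rewrite mulnE mult_INR in HcR.
apply Rnot_le_lt in Hcase.
have HY := pos_INR #|W|.
have Hsq := sqrt_sqrt (INR k) (pos_INR k).
rewrite INR_pow2 in Hcase.
have -> : (4 ^ #|V| = 2 ^ #|V| * 2 ^ #|V|)%R.
  rewrite -Rpow_mult_distr; f_equal; lra.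
apply: Rle_trans HcR _.
set X := (d * 2 ^ #|V| * sqrt (INR k))%R in Hcase.
have -> : (d ^ 2 * (2 ^ #|V| * 2 ^ #|V|) * INR k = X * X)%R.
  rewrite /X -{1}Hsq; ring.
apply: Rmult_le_compat => //; lra.
Qed.
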